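(* Let $\mathcal{R}$ be a finite family of axis-parallel rectangles in general position in which every pair of intersecting rectangles has a corner intersection. Then $\mathrm{tw}(G_{\mathcal{R}})\le 2\cdot\mathrm{tw}(A_{\mathcal{R}})+1$.
   Context: Rectangles are closed axis-parallel rectangles $X\times Y$; general position means all specifying intervals have pairwise distinct endpoints. Two intersecting rectangles have a corner intersection if one contains one or two corners of the other but neither contains the other. $G_{\mathcal{R}}$ is the intersection graph (vertices $\mathcal{R}$, edges between distinct intersecting rectangles). A joint is a point where the boundaries of two distinct rectangles intersect; the arrangement graph $A_{\mathcal{R}}$ has the joints as vertices, and $\{u,v\}$ is an edge iff $u,v$ are joints on the boundary of some rectangle with no other joint on that boundary between them. $\mathrm{tw}$ denotes treewidth: the minimum over tree decompositions (a tree whose nodes are vertex subsets covering all vertices and edges, with the nodes containing any fixed vertex forming a connected subtree) of the maximum node size minus one. *)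

(* Defs.v *)
From mathcomp Require Import all_boot all_order all_algebra.
From mathcomp Require Import reals.
Set Implicit Arguments. Unset Strict Implicit. Unset Printing Implicit Defensive.
Import Order.TTheory GRing.Theory Num.Theory.
Local Open Scope ring_scope.

Record rect (R : realType) := Rect { xl : R; xr : R; yb : R; yt : R }.

Definition rect_wf (R : realType) (r : rect R) : Prop :=
  xl r <= xr r /\ yb r <= yt r.

Definition in_rect (R : realType) (r : rect R) (p : R * R) : bool :=
  (xl r <= p.1 <= xr r) && (yb r <= p.2 <= yt r).

Definition on_bd (R : realType) (r : rect R) (p : R * R) : bool :=
  in_rect r p && [|| p.1 == xl r, p.1 == xr r, p.2 == yb r | p.2 == yt r].

Definition corners (R : realType) (r : rect R) : seq (R * R) :=
  [:: (xl r, yb r); (xr r, yb r); (xr r, yt r); (xl r, yt r)].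

Definition rects_meet (R : realType) (r s : rect R) : Prop :=
  exists p, in_rect r p && in_rect s p.

Definition rect_contains (R : realType) (r s : rect R) : Prop :=
  forall p, in_rect s p -> in_rect r p.

Definition corner_inter (R : realType) (r s : rect R) : Prop :=
  [/\ rects_meet r s, ~ rect_contains r s, ~ rect_contains s r &
      (count (in_rect r) (corners s) \in [:: 1%N; 2%N]) \/
      (count (in_rect s) (corners r) \in [:: 1%N; 2%N])].

Definition xends (R : realType) (r : rect R) : seq R := [:: xl r; xr r].
Definition yends (R : realType) (r : rect R) : seq R := [:: yb r; yt r].

Definition general_position (R : realType) (I : finType) (F : I -> rect R) : Prop :=
  (forall i, xl (F i) != xr (F i) /\ yb (F i) != yt (F i)) /\
  (forall i j, i != j ->
     (forall a b, a \in xends (F i) -> b \in xends (F j) -> a != b) /\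
     (forall a b, a \in yends (F i) -> b \in yends (F j) -> a != b)).

Definition is_tree (T : finType) (te : rel T) : Prop :=
  [/\ (exists t : T, True), symmetric te, irreflexive te,
      (forall s t, connect te s t) &
      (forall (x : T) (p : seq T), uniq (x :: p) -> (2 <= size p)%N ->
          ~~ cycle te (x :: p))].

Definition is_tree_decomp (V : eqType) (vert : V -> Prop) (adj : V -> V -> Prop)
    (T : finType) (te : rel T) (B : T -> seq V) : Prop :=
  [/\ is_tree te,
      (forall t v, v \in B t -> vert v),
      (forall v, vert v -> exists t, v \in B t),
      (forall u v, adj u v -> exists t, (u \in B t) && (v \in B t)) &
      (forall v s t, v \in B s -> v \in B t ->
          connect [rel a b | [&& te a b, v \in B a & v \in B b]] s t)].

Definition tw_le (V : eqType) (vert : V -> Prop) (adj : V -> V -> Prop) (k : nat) : Prop :=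
  exists (T : finType) (te : rel T) (B : T -> seq V),
    is_tree_decomp vert adj te B /\ (forall t, (size (undup (B t)) <= k.+1)%N).

Definition inter_adj (R : realType) (I : finType) (F : I -> rect R) (i j : I) : Prop :=
  i != j /\ rects_meet (F i) (F j).

Definition joint (R : realType) (I : finType) (F : I -> rect R) (p : R * R) : Prop :=
  exists i j, [/\ i != j, on_bd (F i) p & on_bd (F j) p].

(* counter-clockwise arclength position of a boundary point, starting at the
   bottom-left corner; injective on the boundary, values in [0, perimeter) *)
Definition bd_pos (R : realType) (r : rect R) (p : R * R) : R :=
  let w := xr r - xl r in let h := yt r - yb r in
  if p.2 == yb r then p.1 - xl r
  else if p.1 == xr r then w + (p.2 - yb r)
  else if p.2 == yt r then w + h + (xr r - p.1)
  else w + w + h + (yt r - p.2).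

(* arrangement graph A_R: u, v are distinct joints on the boundary of some
   rectangle, and one of the two boundary arcs between them contains no
   other joint *)
Definition arr_adj (R : realType) (I : finType) (F : I -> rect R) (u v : R * R) : Prop :=
  [/\ joint F u, joint F v, u != v &
    exists i, [/\ on_bd (F i) u, on_bd (F i) v &
      let a := Num.min (bd_pos (F i) u) (bd_pos (F i) v) in
      let b := Num.max (bd_pos (F i) u) (bd_pos (F i) v) in
      (forall w, joint F w -> on_bd (F i) w -> ~ (a < bd_pos (F i) w < b)) \/
      (forall w, joint F w -> on_bd (F i) w -> a <= bd_pos (F i) w <= b)]].

(* Main.v *)
Require Import Defs.
From mathcomp Require Import all_boot all_order all_algebra.
From mathcomp Require Import reals boolp.
Set Implicit Arguments. Unset Strict Implicit. Unset Printing Implicit Defensive.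

Module Part1.
Import Order.TTheory GRing.Theory Num.Theory.
Local Open Scope ring_scope.

Section Geo.
Variable R : realType.

Lemma ext_end (l1 r1 l2 r2 : R) : l1 <= r2 -> l2 <= r1 ->
  ~~ ((l2 <= l1) && (r1 <= r2)) -> exists2 a, a \in [:: l2; r2] & l1 <= a <= r1.
Proof.
move=> h1 h2; rewrite negb_and -!ltNge => /orP[h|h].
  by exists l2; rewrite ?inE ?eqxx //= h2 andbT ltW.
by exists r2; rewrite ?inE ?eqxx ?orbT //= h1 ltW.
Qed.

Lemma pt (r s : rect R) a b : rect_wf r -> rect_wf s ->
  a \in xends r -> xl s <= a <= xr s -> b \in yends s -> yb r <= b <= yt r ->
  on_bd r (a, b) && on_bd s (a, b).
Proof.
case=> hr1 hr2 [hs1 hs2] ha /andP[ha1 ha2] hb /andP[hb1 hb2].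
have [ha3 ha4] : xl r <= a /\ a <= xr r.
  by move: ha; rewrite !inE => /orP[]/eqP->; split.
have [hb3 hb4] : yb s <= b /\ b <= yt s.
  by move: hb; rewrite !inE => /orP[]/eqP->; split.
rewrite /on_bd /in_rect /= ha1 ha2 hb1 hb2 ha3 ha4 hb3 hb4 /=.
by move: ha hb; rewrite !inE => /orP[]-> /orP[]->; rewrite ?orbT.
Qed.

Lemma corner_pt (r s : rect R) : rect_wf r -> rect_wf s -> rects_meet r s ->
  ~ rect_contains r s -> ~ rect_contains s r ->
  exists p, on_bd r p && on_bd s p.
Proof.
move=> wr ws [[p1 p2]] /andP[]; rewrite /in_rect /= => /andP[/andP[x1 x2] /andP[y1 y2]]
  /andP[/andP[x3 x4] /andP[y3 y4]] ncrs ncsr.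
have ox1 : xl r <= xr s by apply: le_trans x1 x4.
have ox2 : xl s <= xr r by apply: le_trans x3 x2.
have oy1 : yb r <= yt s by apply: le_trans y1 y4.
have oy2 : yb s <= yt r by apply: le_trans y3 y2.
have nr : ~~ ((xl s <= xl r) && (xr r <= xr s)) || ~~ ((yb s <= yb r) && (yt r <= yt s)).
  rewrite -negb_and; apply/negP => /andP[/andP[a1 a2] /andP[a3 a4]]; apply: ncsr.
  move=> [q1 q2]; rewrite /in_rect /= => /andP[/andP[b1 b2] /andP[b3 b4]].
  by rewrite (le_trans a1 b1) (le_trans b2 a2) (le_trans a3 b3) (le_trans b4 a4).
have ns : ~~ ((xl r <= xl s) && (xr s <= xr r)) || ~~ ((yb r <= yb s) && (yt s <= yt r)).
  rewrite -negb_and; apply/negP => /andP[/andP[a1 a2] /andP[a3 a4]]; apply: ncrs.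
  move=> [q1 q2]; rewrite /in_rect /= => /andP[/andP[b1 b2] /andP[b3 b4]].
  by rewrite (le_trans a1 b1) (le_trans b2 a2) (le_trans a3 b3) (le_trans b4 a4).
have swap : forall q, on_bd s q && on_bd r q -> on_bd r q && on_bd s q.
  by move=> q /andP[-> ->].
case/orP: nr => nr; case/orP: ns => ns.
-
  case: (boolP ((yb r <= yb s) && (yt s <= yt r))) => sy.
    have [a ha1 ha2] := ext_end ox2 ox1 ns.
    case/andP: sy => sy1 sy2.
    exists (a, yb s); apply: pt => //; rewrite ?inE ?eqxx // sy1 /=.
    by case: ws => _ /le_trans; apply.
  have [a ha1 ha2] := ext_end ox1 ox2 nr.
  have [b hb1 hb2] := ext_end oy2 oy1 sy.
  by exists (a, b); apply: swap; apply: pt.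
- have [a ha1 ha2] := ext_end ox1 ox2 nr.
  have [b hb1 hb2] := ext_end oy2 oy1 ns.
  by exists (a, b); apply: swap; apply: pt.
- have [a ha1 ha2] := ext_end ox2 ox1 ns.
  have [b hb1 hb2] := ext_end oy1 oy2 nr.
  by exists (a, b); apply: pt.
- case: (boolP ((xl r <= xl s) && (xr s <= xr r))) => sx.
    have [b hb1 hb2] := ext_end oy2 oy1 ns.
    case/andP: sx => sx1 sx2.
    exists (xl s, b); apply: swap; apply: pt => //; rewrite ?inE ?eqxx // sx1 /=.
    by rewrite ox2.
  have [a ha1 ha2] := ext_end ox2 ox1 sx.
  have [b hb1 hb2] := ext_end oy1 oy2 nr.
  by exists (a, b); apply: pt.
Qed.
End Geo.

Import Order.TTheory GRing.Theory Num.Theory.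
Local Open Scope ring_scope.

Lemma bd_ends (R : realType) (r : rect R) p : on_bd r p -> (p.1 \in xends r) || (p.2 \in yends r).
Proof. by rewrite /on_bd !inE => /andP[_]; rewrite !orbA. Qed.

Lemma count_le1 (T : eqType) (a : pred T) (s : seq T) : uniq s ->
  (forall x y, a x -> a y -> x = y) -> (count a s <= 1)%N.
Proof.
elim: s => //= x s IH /andP[xs us] h.
case ax: (a x) => /=; last by rewrite add0n IH.
suff -> : count a s = 0%N by [].
apply/eqP; rewrite -leqn0 leqNgt -has_count; apply/hasP => -[y ys ay].
by move: xs; rewrite (h _ _ ax ay) ys.
Qed.

Section GP.
Variables (R : realType) (I : finType) (F : I -> rect R).
Hypothesis gp : general_position F.

Lemma gp2 i j p : i != j -> on_bd (F i) p -> on_bd (F j) p ->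
  (p.1 \in xends (F i)) && (p.2 \in yends (F j)) ||
  (p.1 \in xends (F j)) && (p.2 \in yends (F i)).
Proof.
move=> ij /bd_ends /orP[]hi /bd_ends /orP[]hj; rewrite ?hi ?hj ?orbT //.
- by have := (gp.2 i j ij).1 _ _ hi hj; rewrite eqxx.
- by have := (gp.2 i j ij).2 _ _ hi hj; rewrite eqxx.
Qed.

Lemma cnt_bd p : (count (fun i => on_bd (F i) p) (enum I) <= 2)%N.
Proof.
apply: (@leq_trans (count (fun i => p.1 \in xends (F i)) (enum I) +
                    count (fun i => p.2 \in yends (F i)) (enum I))).
  rewrite -count_predUI; apply: leq_trans (leq_addr _ _).
  by apply: sub_count => i /bd_ends.
have h1 : forall (P : I -> R -> bool) (q : R),
  (forall i j, i != j -> q \in P i -> q \in P j -> False) ->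
  (count (fun i => q \in P i) (enum I) <= 1)%N.
  move=> P q H; apply: count_le1; first exact: enum_uniq.
  by move=> x y hx hy; apply/eqP; apply/negPn/negP => /H; apply.
rewrite -[2%N]/(1 + 1)%N leq_add //; apply: h1 => i j ij hi hj.
  by have := (gp.2 i j ij).1 _ _ hi hj; rewrite eqxx.
by have := (gp.2 i j ij).2 _ _ hi hj; rewrite eqxx.
Qed.

Definition allx := [seq xl (F i) | i <- enum I] ++ [seq xr (F i) | i <- enum I].
Definition ally := [seq yb (F i) | i <- enum I] ++ [seq yt (F i) | i <- enum I].
Definition cands := [seq (a, b) | a <- allx, b <- ally].

Lemma xin i a : a \in xends (F i) -> a \in allx.
Proof. by rewrite !inE mem_cat => /orP[]/eqP->; rewrite map_f ?mem_enum ?orbT. Qed.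
Lemma yin i a : a \in yends (F i) -> a \in ally.
Proof. by rewrite !inE mem_cat => /orP[]/eqP->; rewrite map_f ?mem_enum ?orbT. Qed.

Lemma joint_cands p : joint F p -> p \in cands.
Proof.
move=> [i [j [ij hi hj]]]; case: p hi hj => a b hi hj.
case/orP: (gp2 ij hi hj) => /andP[ha hb]; apply: allpairs_f;
  by [apply: xin ha | apply: yin hb].
Qed.
End GP.

Import Order.TTheory GRing.Theory Num.Theory.
Local Open Scope ring_scope.

Lemma count_lt (T : eqType) (a1 a2 : pred T) s x :
  subpred a1 a2 -> x \in s -> a2 x -> ~~ a1 x -> (count a1 s < count a2 s)%N.
Proof.
move=> sub xs ax nx.
have e : count a2 s = (count a1 s + count (predC a1) (filter a2 s))%N.
  rewrite -size_filter -(count_predC a1 (filter a2 s)) count_filter; congr (_ + _)%N.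
  by apply: eq_count => y /=; case h: (a1 y) => //=; rewrite sub.
rewrite e -{1}[count a1 s]addn0 ltn_add2l -has_count; apply/hasP; exists x => //.
by rewrite mem_filter ax.
Qed.

Section Chain.
Variables (R : realType) (I : finType) (F : I -> rect R).
Hypothesis gp : general_position F.
Variables (T : finType) (te : rel T) (B : T -> seq (R * R)).
Hypothesis dec : is_tree_decomp (joint F) (arr_adj F) te B.

Definition Ei i := [rel a b | [&& te a b, has (on_bd (F i)) (B a) & has (on_bd (F i)) (B b)]].

Lemma sub_u i u s t : on_bd (F i) u -> u \in B s -> u \in B t -> connect (Ei i) s t.
Proof.
case: dec => _ _ _ _ sub hu hs ht; move: (sub u s t hs ht); apply: connect_sub.
move=> a b /and3P[h1 h2 h3]; apply: connect1; rewrite /= h1.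
by apply/and3P; split => //; apply/hasP; exists u.
Qed.

Lemma adj_case i u v : joint F u -> joint F v -> on_bd (F i) u -> on_bd (F i) v ->
  bd_pos (F i) u <= bd_pos (F i) v ->
  ~ (exists w, [/\ joint F w, on_bd (F i) w & bd_pos (F i) u < bd_pos (F i) w < bd_pos (F i) v]) ->
  forall s t, u \in B s -> v \in B t -> connect (Ei i) s t.
Proof.
move=> ju jv bu bv le nw s t us vt.
case: (eqVneq u v) => [e|uv].
  by rewrite -e in vt; exact: (sub_u bu us vt).
have adj : arr_adj F u v.
  split=> //; exists i; split => //; left => w jw bw hw.
  apply: nw; exists w; split => //.
  by move: hw; rewrite Order.POrderTheory.min_l ?Order.POrderTheory.max_r.
case: dec => _ _ _ hadj _; have [t0 /andP[u0 v0]] := hadj _ _ adj.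
apply: (connect_trans (sub_u bu us u0)); exact: sub_u bv v0 vt.
Qed.

Lemma chain i n : forall u v,
  (count (fun c => (bd_pos (F i) u < bd_pos (F i) c < bd_pos (F i) v)%R) (cands F) <= n)%N ->
  joint F u -> joint F v -> on_bd (F i) u -> on_bd (F i) v ->
  bd_pos (F i) u <= bd_pos (F i) v ->
  forall s t, u \in B s -> v \in B t -> connect (Ei i) s t.
Proof.
elim: n => [|n IH] u v hc ju jv bu bv le s t us vt.
  apply: (adj_case ju jv bu bv le) => // -[w [jw bw hw]].
  move: hc; rewrite leqNgt -has_count => /hasPn/(_ w (joint_cands gp jw)) /=.
  by rewrite hw.
have [[w [jw bw /andP[hw1 hw2]]]|nw] :=
  pselect (exists w, [/\ joint F w, on_bd (F i) w & bd_pos (F i) u < bd_pos (F i) w < bd_pos (F i) v]);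
  last exact: (adj_case ju jv bu bv le nw).
have wc := joint_cands gp jw.
have [tw wtw] : exists t, w \in B t by case: dec => _ _ h _ _; apply: h.
apply: (@connect_trans _ _ tw).
  apply: (IH u w) => //; last exact: ltW.
  rewrite -ltnS; apply: leq_trans hc; apply: (count_lt (x := w)) => //.
  - by move=> c /= /andP[-> h]; rewrite (lt_trans h hw2).
  - by rewrite /= hw1 hw2.
  - by rewrite /= ltxx andbF.
apply: (IH w v) => //; last exact: ltW.
rewrite -ltnS; apply: leq_trans hc; apply: (count_lt (x := w)) => //.
- by move=> c /= /andP[h ->]; rewrite (lt_trans hw1 h).
- by rewrite /= hw1 hw2.
- by rewrite /= ltxx.
Qed.

Lemma Ei_sym i : symmetric (Ei i).
Proof.
case: dec => -[_ tsym _ _ _] _ _ _ _ a b.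
by rewrite /= tsym; congr (_ && _); exact: andbC.
Qed.

Lemma chain_all i u v : joint F u -> joint F v -> on_bd (F i) u -> on_bd (F i) v ->
  forall s t, u \in B s -> v \in B t -> connect (Ei i) s t.
Proof.
move=> ju jv bu bv s t us vt.
case: (lerP (bd_pos (F i) u) (bd_pos (F i) v)) => [le|/ltW le].
  exact: (chain (leqnn _) ju jv bu bv le).
rewrite (sym_connect_sym (Ei_sym i)); exact: (chain (leqnn _) jv ju bv bu le).
Qed.
End Chain.


End Part1.
Import Part1.

Lemma lift_connect (T T' : finType) (e : rel T) (e' : rel T') (f : T -> T') x y :
  (forall a b, e a b -> e' (f a) (f b)) -> connect e x y -> connect e' (f x) (f y).
Proof.
move=> h /connectP[p pth ->]; apply/connectP; exists (map f p); last by rewrite last_map.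
exact: homo_path pth.
Qed.

Section Tree.
Variables (T I : finType) (te : rel T) (t0 : T).
Definition te' : rel (T + I) := fun a b =>
  match a, b with
  | inl x, inl y => te x y
  | inl x, inr _ => x == t0
  | inr _, inl y => y == t0
  | inr _, inr _ => false
  end.

Lemma tree' : is_tree te -> is_tree te'.
Proof.
case=> _ tsym tirr tconn tacyc.
have lc : forall x y, connect te' (inl x) (inl y).
  by move=> x y; apply: (lift_connect (e := te)) => //; apply: tconn.
have sy : symmetric te'.
  by case=> [x|x] [y|y] //=; rewrite tsym.
split.
- by exists (inl t0).
- exact: sy.
- by case=> [x|x] //=; rewrite tirr.
- have h0 : forall a, connect te' a (inl t0).
    by case=> [x|x]; [apply: lc | apply: connect1; rewrite /= eqxx].
  move=> a b; apply: connect_trans (h0 a) _.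
  by rewrite (sym_connect_sym sy) h0.
- move=> x p uq sz; apply/negP => cy.
  have [[i hi]|nr] := pselect (exists i, inr i \in x :: p).
    have := rot_index hi; set q := drop _ _ ++ take _ _ => ro.
    have : cycle te' (inr i :: q) by rewrite -ro rot_cycle.
    have : uniq (inr i :: q) by rewrite -ro rot_uniq.
    have : (2 <= size q)%N.
      have := size_rot (index (inr i) (x :: p)) (x :: p); rewrite ro /= => -[->].
      exact: sz.
    case: q {ro} => [|y [|z q]] //= _ /andP[_ /andP[yn _]].
    move=> /and3P[h1 _]; rewrite rcons_path => /andP[_ h2].
    case: y h1 yn => [y|y] //= /eqP -> yn.
    have hm := mem_last z q; move: h2 hm.
    by case: (last z q) => [w|w] //= /eqP -> hm; rewrite hm in yn.
  pose g (z : T + I) := if z is inl a then a else t0.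
  have allinl : forall z, z \in x :: p -> z = inl (g z).
    by case=> [a|a] //= h; case: nr; exists a.
  have ec : x :: p = map inl (map g (x :: p)).
    by rewrite -map_comp map_id_in // => z /allinl.
  move: uq cy; rewrite ec map_inj_uniq; last by move=> a b [].
  rewrite cycle_map /= => uq cy.
  by have := tacyc (g x) (map g p) uq; rewrite size_map => /(_ sz) /negP; apply; exact: cy.
Qed.
End Tree.


Lemma count_has (T : Type) (U : eqType) (P : T -> U -> bool) (s : seq T) (L : seq U) :
  (forall p, p \in L -> count (fun i => P i p) s <= 2) ->
  count (fun i => has (P i) L) s <= 2 * size L.
Proof.
elim: L => [|p L IH] h /=; first by clear h; elim: s.
apply: (@leq_trans (count (fun i => P i p) s + count (fun i => has (P i) L) s)).
  rewrite -count_predUI; apply: leq_trans (leq_addr _ _).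
  by apply: sub_count => i.
rewrite mulnS leq_add //; first by apply: h; rewrite mem_head.
by apply: IH => q hq; apply: h; rewrite inE hq orbT.
Qed.

Theorem lemma6 (R : realType) (I : finType) (F : I -> rect R) :
  (forall i, rect_wf (F i)) ->
  general_position F ->
  (forall i j, i != j -> rects_meet (F i) (F j) -> corner_inter (F i) (F j)) ->
  forall k : nat,
    tw_le (joint F) (arr_adj F) k ->
    tw_le (fun _ : I => True) (inter_adj F) (2 * k + 1).
Proof.
move=> wf gp hc k [T [te [B [dec hsz]]]].
have dec' := dec.
case: dec' => -[[t0 _] tsym tirr tconn tacyc] vin vex eadj sub.
pose iso i := ~ exists p, joint F p /\ on_bd (F i) p.
pose bag (a : T + I) := match a with
  | inl t => [seq i <- enum I | has (on_bd (F i)) (B t)]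
  | inr i => if pselect (iso i) then [:: i] else [::] end.
have inl_bag : forall t i, (i \in bag (inl t)) = has (on_bd (F i)) (B t).
  by move=> t i; rewrite /= mem_filter mem_enum andbT.
have inr_bag : forall j i, i \in bag (inr j) -> i = j /\ iso i.
  move=> j i /=; case: pselect => // h; rewrite inE => /eqP -> //.
have inl_niso : forall t i, i \in bag (inl t) -> ~ iso i.
  move=> t i; rewrite inl_bag => /hasP[p pB bp]; apply; exists p; split => //.
  exact: vin pB.
exists (T + I)%type, (@te' T I te t0), bag; split; first split.
- by apply: tree'; split => //; exists t0.
- by [].
- move=> i _; have [h|h] := pselect (iso i).
    exists (inr i); rewrite /bag; destruct (pselect (iso i)) as [hh|nh]; [exact: mem_head | by []].
  have [p [jp bp]] : exists p, joint F p /\ on_bd (F i) p by apply: contrapT.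
  have [t pt] := vex p jp; exists (inl t); rewrite inl_bag; apply/hasP; by exists p.
- move=> i j [ij meet]; have [_ n1 n2 _] := hc _ _ ij meet.
  have [p /andP[bi bj]] := corner_pt (wf i) (wf j) meet n1 n2.
  have jp : joint F p by exists i, j.
  have [t pt] := vex p jp; exists (inl t); rewrite !inl_bag.
  by apply/andP; split; apply/hasP; exists p.
- move=> i [a|a] [b|b] ha hb.
  + move: (ha) (hb); rewrite !inl_bag => /hasP[u ua bu] /hasP[v vb bv].
    have := chain_all gp dec (vin _ _ ua) (vin _ _ vb) bu bv ua vb.
    apply: lift_connect => x y /= /and3P[h1 h2 h3].
    by rewrite h1 !inl_bag h2 h3.
  + by case: (inl_niso _ _ ha); case: (inr_bag _ _ hb).
  + by case: (inl_niso _ _ hb); case: (inr_bag _ _ ha).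
  + by case: (inr_bag _ _ ha) => <- _; case: (inr_bag _ _ hb) => <- _; apply: connect0.
- case=> [t|i] /=.
    rewrite undup_id; last by rewrite filter_uniq // enum_uniq.
    rewrite size_filter.
    have -> : count (fun i => has (on_bd (F i)) (B t)) (enum I) =
              count (fun i => has (on_bd (F i)) (undup (B t))) (enum I).
      by apply: eq_count => i; apply: eq_has_r => p; rewrite mem_undup.
    have hc2 : forall p, p \in undup (B t) -> count (fun i => on_bd (F i) p) (enum I) <= 2.
      by move=> p _; apply: cnt_bd.
    apply: (leq_trans (count_has hc2)).
    have := hsz t; rewrite -(leq_pmul2l (isT : 0 < 2)) => /leq_trans; apply.
    by rewrite mulnS addn1 addnC addn2.
  by case: pselect.
Qed.
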